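(* Let the setting be as described in the context. For each $N\in\mathcal N$ with $\mathcal E_N\cap\mathcal E_I\neq\emptyset$ let $\theta_N\in M_h$ be the unique element vanishing on $\mathcal E_I\setminus\mathcal E_N$ such that for every $K\in\mathcal T_N$: $b(\theta_N,\lambda_N\chi_K)=r(\lambda_N\chi_K)$ and $b(\theta_N,\lambda_M\chi_K)=0$ for every vertex $M\neq N$ of $K$ (and set $\theta_N=0$ if $\mathcal E_N\cap\mathcal E_I=\emptyset$). Let $(u_h,\theta_h)\in DG_h\times M_h$ be the solution of the mixed problem $\tilde a_h(u_h,w)+b(\theta_h,w)=l_h(w)$ for all $w\in DG_h$, $b(\mu,u_h)=0$ for all $\mu\in M_h$. Then $$\theta_h=\sum_{N\in\mathcal N}\theta_N .$$
   Context: Let $\Omega\subset\mathbb R^2$ be a bounded domain with Lipschitz, piecewise smooth boundary, $f\in L^2(\Omega)$, $g\in H^{1/2}(\partial\Omega)$. Let $\Omega_0\supset\Omega$ be a polygonal background domain with a shape-regular triangulation $\mathcal T_{0,h}$. Let $\Omega_h$ be a polygonal domain with $\Omega\subset\Omega_h\subset\Omega_0$ such that for each triangle $K$ with $K\cap\partial\Omega_h\neq\emptyset$, $\Gamma_K:=K\cap\partial\Omega_h$ is a line segment; $f$ is extended to $\Omega_h\setminus\Omega$ and $g_h$ is a given function on $\partial\Omega_h$. Active mesh $\mathcal T_h=\{K\in\mathcal T_{0,h}:K\cap\Omega_h\neq\emptyset\}$, $\triangle_h=\bigcup_{K\in\mathcal T_h}K$, $\mathcal T_h^b=\{K:K\cap\partial\Omega_h\neq\emptyset\}$,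 $h_K=\operatorname{diam}K$. $\mathcal E_I$: interior edges of $\mathcal T_h$, each with length $h_F$ and fixed unit normal $\boldsymbol n_F$; jump $[\![v]\!]=v^+-v^-$ and average $\{v\}=\frac12(v^++v^-)$, where $v^\pm(\boldsymbol x)=\lim_{s\to0^+}v(\boldsymbol x\mp s\boldsymbol n_F)$ and $K_F^\pm$ are the neighbours ($\boldsymbol n_F$ outward to $K_F^+$). $\mathcal E_g=\{F\in\mathcal E_I:(K_F^+\cup K_F^-)\cap\partial\Omega_h\neq\emptyset\}$. $\boldsymbol n_h$ outward unit normal of $\partial\Omega_h$, $\partial_{\boldsymbol n_h}=\boldsymbol n_h\cdot\nabla$, $\partial_{\boldsymbol n_F}=\boldsymbol n_F\cdot\nabla$. $\beta,\gamma>0$ constants, $\beta$ large enough that $a_h$ is coercive on $CG_h$. $a_h(w,v)=(\nabla w,\nabla v)_{\Omega_h}-\langle\partial_{\boldsymbol n_h}w,v\rangle_{\partial\Omega_h}-\langle w,\partial_{\boldsymbol n_h}v\rangle_{\partial\Omega_h}+\sum_{K\in\mathcal T_h^b}\frac{\beta}{h_K}\langle w,v\rangle_{\Gamma_K}+\gamma\sum_{F\in\mathcal E_g}h_F\langle[\![\partial_{\boldsymbol n_F}w]\!],[\![\partial_{\boldsymbol n_F}v]\!]\rangle_F$; $l_h(v)=(f,v)_{\Omega_h}-\langle g_h,\partial_{\boldsymbol n_h}v\rangle_{\partial\Omega_h}+\sum_{K\in\mathcal T_h^b}\frac{\beta}{h_K}\langle g_h,v\rangle_{\Gamma_K}$;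 $\tilde a_h(v,w)=a_h(v,w)-\sum_{F\in\mathcal E_I}\langle\{\partial_{\boldsymbol n_F}v\},[\![w]\!]\rangle_{F\cap\Omega_h}-\sum_{F\in\mathcal E_I}\langle\{\partial_{\boldsymbol n_F}w\},[\![v]\!]\rangle_{F\cap\Omega_h}$. $CG_h=\{v\in H^1(\triangle_h):v|_K\in\mathbb P_1(K)\}$, $DG_h=\{v\in L^2(\triangle_h):v|_K\in\mathbb P_1(K)\}$; $u_h$ (first component of the mixed solution) equals the CutFEM solution in $CG_h$. Residual: $r(w)=l_h(w)-\tilde a_h(u_h,w)$, $w\in DG_h$. $\mathcal N$: vertices of $\mathcal T_h$, $\mathcal N_I$: those not on $\partial\triangle_h$; $\mathcal T_N,\mathcal E_N$: elements/edges with vertex $N$; $\mathfrak s_N(F)=\pm1$ according as $\boldsymbol n_F$ is oriented counter-clockwise around $N$ or not. $\lambda_M$: hat function of vertex $M$; $\chi_K$: indicator of $K$. $M_h=\{\mu\in L^2(\mathcal E_I):\mu|_F\in\mathbb P_1(F),\ \sum_{F\in\mathcal E_N\cap\mathcal E_I}\mathfrak s_N(F)h_F\mu|_F(N)=0\ \forall N\in\mathcal N_I\}$, $b(\mu,v)=\sum_{F\in\mathcal E_I}\frac{h_F}{2}\sum_{M\text{ vertex of }F}\mu|_F(M)[\![v]\!](M)$. *)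

(* Defs.v *)
From mathcomp Require Import all_boot all_order all_algebra.
From mathcomp Require Import all_classical all_reals all_analysis.
Import Order.TTheory GRing.Theory Num.Theory.

Set Implicit Arguments.
Unset Strict Implicit.
Unset Printing Implicit Defensive.

Local Open Scope classical_set_scope.
Local Open Scope ring_scope.

Section Plane.
Variable R : realType.
Definition padd (p q : R * R) : R * R := (p.1 + q.1, p.2 + q.2).
Definition psub (p q : R * R) : R * R := (p.1 - q.1, p.2 - q.2).
Definition pscale (t : R) (p : R * R) : R * R := (t * p.1, t * p.2).
Definition dot (p q : R * R) : R := p.1 * q.1 + p.2 * q.2.
Definition cross (p q : R * R) : R := p.1 * q.2 - p.2 * q.1.
Definition pnorm (p : R * R) : R := Num.sqrt (dot p p).
Definition box (c : R * R) (e : R) : set (R * R) :=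
  [set y | `|y.1 - c.1| < e /\ `|y.2 - c.2| < e].
Definition segment (a b : R * R) : set (R * R) :=
  [set x | exists t : R, 0 <= t <= 1 /\ x = padd a (pscale t (psub b a))].
Definition osegment (a b : R * R) : set (R * R) :=
  [set x | exists t : R, 0 < t < 1 /\ x = padd a (pscale t (psub b a))].
Definition hull (s : seq (R * R)) : set (R * R) :=
  [set x | exists l : nat -> R, (forall i, 0 <= l i) /\
     \sum_(i < size s) l i = 1 /\
     x = (\sum_(i < size s) l i * (nth (0,0) s i).1,
          \sum_(i < size s) l i * (nth (0,0) s i).2)].
Definition is_open (A : set (R * R)) : Prop :=
  forall x, A x -> exists2 e : R, 0 < e & box x e `<=` A.
Definition is_connected (A : set (R * R)) : Prop :=
  forall B C : set (R * R), is_open B -> is_open C ->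
    A = B `|` C -> B `&` C = set0 -> B = set0 \/ C = set0.
Definition is_bounded (A : set (R * R)) : Prop :=
  exists M : R, forall x, A x -> `|x.1| <= M /\ `|x.2| <= M.
Definition bdry (A : set (R * R)) : set (R * R) :=
  [set x | forall e : R, 0 < e ->
     (exists y, box x e y /\ A y) /\ (exists y, box x e y /\ ~ A y)].
Definition polygonal_domain (A : set (R * R)) : Prop :=
  [/\ is_open A, is_connected A, is_bounded A, A !=set0 &
      exists s : seq ((R * R) * (R * R)),
        bdry A = [set x | exists2 pq, pq \in s & segment pq.1 pq.2 x]].
Definition lam2 := ((@lebesgue_measure R) \x (@lebesgue_measure R))%E.
End Plane.

(*   Vt : vertices  N  of the active mesh T_h                          *)
(*   El : elements  K  of the active mesh T_h                          *)
Record fem_data (R : realType) (Vt El : finType) := FemData {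
  coord : Vt -> R * R;
  ev : El -> 'I_3 -> Vt;
  ea : {set Vt} -> Vt;              (* endpoints of an edge F = {ea,eb}*)
  eb : {set Vt} -> Vt;
  nF : {set Vt} -> R * R;           (* fixed unit normal n_F of edge F *)
  Omh : set (R * R);
  aK : El -> R * R;                 (* Gamma_K = [aK K, bK K]          *)
  bK : El -> R * R;
  nh : R * R -> R * R;              (* outward unit normal of dOmega_h *)
  ff : R * R -> R;                  (* (extended) right-hand side f    *)
  gh : R * R -> R;
  beta : R;
  gamma : R }.

Section FEM.
Variables (R : realType) (Vt El : finType) (D : fem_data R Vt El).

Local Notation coord := (coord D).
Local Notation ev := (ev D).
Local Notation Om := (Omh D).

Definition vx (K : El) (i : 'I_3) : R * R := coord (ev K i).
Definition i0 : 'I_3 := ord0.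
Definition i1 : 'I_3 := ordS i0.
Definition i2 : 'I_3 := ordS i1.
Definition dblarea (K : El) : R :=
  cross (psub (vx K i1) (vx K i0)) (psub (vx K i2) (vx K i0)).
Definition bary (K : El) (i : 'I_3) (x : R * R) : R :=
  cross (psub (vx K (ordS i)) x) (psub (vx K (ordS (ordS i))) x) / dblarea K.
Definition gbary (K : El) (i : 'I_3) : R * R :=
  let d := psub (vx K (ordS i)) (vx K (ordS (ordS i))) in
  (d.2 / dblarea K, - d.1 / dblarea K).
Definition tri (K : El) : set (R * R) := hull [:: vx K i0; vx K i1; vx K i2].
Definition vset (K : El) : {set Vt} := [set ev K i | i : 'I_3].
Definition Deltah : set (R * R) := [set x | exists K, tri K x].
Definition hK (K : El) : R :=
  \big[Num.max/0]_(i : 'I_3) \big[Num.max/0]_(j : 'I_3) pnorm (psub (vx K i) (vx K j)).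

Definition conforming_mesh : Prop :=
  injective coord /\
  (forall K, injective (ev K)) /\
  (forall K, dblarea K != 0) /\
  (forall K K', K != K' -> vset K != vset K') /\
  (forall K K', K != K' ->
     tri K `&` tri K' = hull [seq coord M | M <- enum (vset K :&: vset K')]) /\
  (forall N : Vt, exists K i, ev K i = N).

(* DG_h : a function in DG_h is given by its three vertex values on each K *)
Definition DGfun := El -> 'I_3 -> R.
Definition pval (w : DGfun) (K : El) (x : R * R) : R :=
  \sum_(i : 'I_3) w K i * bary K i x.
Definition pgrad (w : DGfun) (K : El) : R * R :=
  (\sum_(i : 'I_3) w K i * (gbary K i).1, \sum_(i : 'I_3) w K i * (gbary K i).2).
Definition locv (w : DGfun) (K : El) (M : Vt) : R :=
  \sum_(i : 'I_3 | ev K i == M) w K i.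
(* CG_h = DG_h cap H^1 = continuous piecewise linears *)
Definition inCG (w : DGfun) : Prop :=
  forall K K' i j, ev K i = ev K' j -> w K i = w K' j.
(* lambda_M chi_K *)
Definition hatK (M : Vt) (K : El) : DGfun :=
  fun K' j => if (K' == K) && (ev K' j == M) then 1 else 0.

Definition isIE (F : {set Vt}) : bool :=
  (#|F| == 2)%N && (#|[set K | F \subset vset K]%SET| == 2)%N.
Definition elen (F : {set Vt}) : R := pnorm (psub (coord (eb D F)) (coord (ea D F))).
(* K = K_F^+ : n_F is the outward normal of K along F *)
Definition isPlus (K : El) (F : {set Vt}) : bool :=
  [forall i, [forall j, ((ev K i \notin F) && (ev K j \in F)) ==>
      (dot (nF D F) (vx K i) < dot (nF D F) (vx K j))]].
Definition epsKF (K : El) (F : {set Vt}) : R := if isPlus K F then 1 else -1.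
(* jump [[w]] = w^+ - w^- at a vertex M of F, and at a point x of F *)
Definition jumpv (w : DGfun) (F : {set Vt}) (M : Vt) : R :=
  \sum_(K | F \subset vset K) epsKF K F * locv w K M.
Definition jumpx (w : DGfun) (F : {set Vt}) (x : R * R) : R :=
  \sum_(K | F \subset vset K) epsKF K F * pval w K x.
Definition avgdn (w : DGfun) (F : {set Vt}) : R :=
  2^-1 * \sum_(K | F \subset vset K) dot (pgrad w K) (nF D F).
Definition jumpdn (w : DGfun) (F : {set Vt}) : R :=
  \sum_(K | F \subset vset K) epsKF K F * dot (pgrad w K) (nF D F).

(* multipliers : mu|_F in P1(F), given by its values mu F M at the endpoints *)
Definition Mfun := {set Vt} -> Vt -> R.
Definition bform (mu : Mfun) (w : DGfun) : R :=
  \sum_(F | isIE F) (elen F / 2 * \sum_(M in F) mu F M * jumpv w F M).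
Definition otherend (N : Vt) (F : {set Vt}) : Vt :=
  if N == ea D F then eb D F else ea D F.
(* s_N(F) = 1 iff n_F points counter-clockwise around N *)
Definition sgnN (N : Vt) (F : {set Vt}) : R :=
  if 0 < cross (psub (coord (otherend N F)) (coord N)) (nF D F) then 1 else -1.
(* N in N_I : N not on the boundary of Delta_h *)
Definition interiorV (N : Vt) : Prop :=
  exists2 e : R, 0 < e & box (coord N) e `<=` Deltah.
Definition inMh (mu : Mfun) : Prop :=
  forall N, interiorV N ->
    \sum_(F | isIE F && (N \in F)) sgnN N F * elen F * mu F N = 0.

Definition ept (F : {set Vt}) (t : R) : R * R :=
  padd (coord (ea D F)) (pscale t (psub (coord (eb D F)) (coord (ea D F)))).
Definition edge_int (F : {set Vt}) (phi : R * R -> R) : R :=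
  elen F * Rintegral (@lebesgue_measure R) [set t | 0 <= t <= 1 /\ Om (ept F t)]
                     (fun t => phi (ept F t)).
Definition Gamma (K : El) : set (R * R) := tri K `&` bdry Om.
Definition isTb (K : El) : bool := `[< exists x, Gamma K x >].
Definition gpt (K : El) (t : R) : R * R :=
  padd (aK D K) (pscale t (psub (bK D K) (aK D K))).
Definition gam_int (K : El) (phi : R * R -> R) : R :=
  pnorm (psub (bK D K) (aK D K)) *
  Rintegral (@lebesgue_measure R) [set t | 0 <= t <= 1] (fun t => phi (gpt K t)).
Definition el_int (K : El) (phi : R * R -> R) : R :=
  Rintegral (@lam2 R) (tri K `&` Om) phi.
Definition isEg (F : {set Vt}) : bool :=
  isIE F && [exists K, (F \subset vset K) && isTb K].

Definition ah (w v : DGfun) : R :=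
  \sum_K el_int K (fun _ => dot (pgrad w K) (pgrad v K))
  - \sum_(K | isTb K) gam_int K (fun x => dot (pgrad w K) (nh D x) * pval v K x)
  - \sum_(K | isTb K) gam_int K (fun x => pval w K x * dot (pgrad v K) (nh D x))
  + \sum_(K | isTb K) (beta D / hK K * gam_int K (fun x => pval w K x * pval v K x))
  + gamma D * \sum_(F | isEg F) (elen F * (elen F * (jumpdn w F * jumpdn v F))).

Definition lh (v : DGfun) : R :=
  \sum_K el_int K (fun x => ff D x * pval v K x)
  - \sum_(K | isTb K) gam_int K (fun x => gh D x * dot (pgrad v K) (nh D x))
  + \sum_(K | isTb K) (beta D / hK K * gam_int K (fun x => gh D x * pval v K x)).

Definition aht (v w : DGfun) : R :=
  ah v w
  - \sum_(F | isIE F) edge_int F (fun x => avgdn v F * jumpx w F x)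
  - \sum_(F | isIE F) edge_int F (fun x => avgdn w F * jumpx v F x).

Definition resid (uh w : DGfun) : R := lh w - aht uh w.

Definition fem_assumptions : Prop :=
  conforming_mesh /\
      (forall F : {set Vt}, #|F| = 2%N -> F = [set ea D F; eb D F]%SET) /\
      (forall F, isIE F -> dot (nF D F) (nF D F) = 1 /\
          dot (nF D F) (psub (coord (eb D F)) (coord (ea D F))) = 0) /\
      (polygonal_domain Om /\ measurable Om /\ Om `<=` Deltah /\
        (forall K, exists x, tri K x /\ Om x)) /\
      (forall K, isTb K -> Gamma K = segment (aK D K) (bK D K)) /\
      (forall K x, isTb K -> osegment (aK D K) (bK D K) x ->
         [/\ dot (nh D x) (nh D x) = 1,
             dot (nh D x) (psub (bK D K) (aK D K)) = 0 &
             exists2 e : R, 0 < e & forall s : R, 0 < s < e ->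
               ~ Om (padd x (pscale s (nh D x))) /\
               Om (psub x (pscale s (nh D x)))]) /\
      (measurable_fun Om (ff D) /\
        (@lam2 R).-integrable Om (fun x => ((ff D x) ^+ 2)%:E) /\
        (forall K, isTb K ->
          measurable_fun (`[0, 1] : set R) (fun t => gh D (gpt K t)) /\
          (@lebesgue_measure R).-integrable (`[0, 1] : set R)
               (fun t => ((gh D (gpt K t)) ^+ 2)%:E))) /\
      (* beta, gamma > 0 and beta large enough: a_h coercive on CG_h *)
      [/\ 0 < beta D, 0 < gamma D &
          forall v, inCG v -> (exists K i, v K i != 0) -> 0 < ah v v].

End FEM.

(* Main.v *)
Require Import Defs.
From mathcomp Require Import all_boot all_order all_algebra.
From mathcomp Require Import all_classical all_reals all_analysis.
From mathcomp Require Import ring lra.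
Import Order.TTheory GRing.Theory Num.Theory.
Local Open Scope ring_scope.
Set Implicit Arguments.
Unset Strict Implicit.
Unset Printing Implicit Defensive.
Section Main.
Variables (R : realType) (Vt El : finType) (D : fem_data R Vt El).
Hypothesis HD : fem_assumptions D.
Local Open Scope ring_scope.

Local Notation coord := (Defs.coord D).
Local Notation ev := (Defs.ev D).

Lemma ordS0 : ordS i0 = i1. Proof. exact: val_inj. Qed.
Lemma ordS1 : ordS i1 = i2. Proof. exact: val_inj. Qed.
Lemma ordS2 : ordS i2 = i0. Proof. exact: val_inj. Qed.
Lemma I3_cases (k : 'I_3) : [\/ k = i0, k = i1 | k = i2].
Proof.
case: k => [[|[|[|//]]] Hk].
- by constructor 1; apply: val_inj.
- by constructor 2; apply: val_inj.
- by constructor 3; apply: val_inj.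
Qed.
Lemma i01 : i0 != i1. Proof. by []. Qed.
Lemma i02 : i0 != i2. Proof. by []. Qed.
Lemma i12 : i1 != i2. Proof. by []. Qed.

Lemma HDc : conforming_mesh D. Proof. by case: HD. Qed.
Lemma ev_inj K : injective (ev K). Proof. by case: HDc => _ [H _]. Qed.
Lemma dbl_neq0 K : dblarea D K != 0. Proof. by case: HDc => _ [_ [H _]]. Qed.
Lemma vset_neq K K' : K != K' -> vset D K != vset D K'.
Proof. by case: HDc => _ [_ [_ [H _]]]; apply: H. Qed.
Lemma tri_cap K K' : K != K' -> (tri D K `&` tri D K')%classic =
   hull [seq coord M | M <- enum (vset D K :&: vset D K')].
Proof. by case: HDc => _ [_ [_ [_ [H _]]]]; apply: H. Qed.
Lemma F2 (F : {set Vt}) : #|F| = 2%N -> F = [set ea D F; eb D F].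
Proof. by case: HD => _ [H _]; apply: H. Qed.
Lemma nFP (F : {set Vt}) : isIE D F -> dot (nF D F) (nF D F) = 1 /\
   dot (nF D F) (psub (coord (eb D F)) (coord (ea D F))) = 0.
Proof. by case: HD => _ [_ [H _]]; apply: H. Qed.

Definition kN (K : El) (N : Vt) : 'I_3 := odflt i0 [pick i | ev K i == N].
Definition v1 K N := ev K (ordS (kN K N)).
Definition v2 K N := ev K (ordS (ordS (kN K N))).

Lemma kNP K N : N \in vset D K -> ev K (kN K N) = N.
Proof.
case/imsetP => i _ ->; rewrite /kN.
case: pickP => [j /eqP //|/(_ i)]; by rewrite eqxx.
Qed.

Lemma in_vset K i : ev K i \in vset D K.
Proof. by apply/imsetP; exists i. Qed.

Section Tri.
Variables (K : El) (N : Vt).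
Hypothesis HN : N \in vset D K.

Lemma v1_in : v1 K N \in vset D K. Proof. exact: in_vset. Qed.
Lemma v2_in : v2 K N \in vset D K. Proof. exact: in_vset. Qed.

Lemma vdist : [/\ N != v1 K N, N != v2 K N & v1 K N != v2 K N].
Proof.
rewrite /v1 /v2; have := kNP HN; set k := kN K N => <-.
rewrite !(inj_eq (@ev_inj K)).
by case: (I3_cases k) => ->; rewrite ?ordS0 ?ordS1 ?ordS2.
Qed.

Lemma vcases M : M \in vset D K -> [\/ M = N, M = v1 K N | M = v2 K N].
Proof.
case/imsetP => i _ ->; rewrite /v1 /v2; have := kNP HN; set k := kN K N => <-.
case: (I3_cases k) => ->; rewrite ?ordS0 ?ordS1 ?ordS2;
case: (I3_cases i) => ->; by [constructor 1 | constructor 2 | constructor 3].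
Qed.

Lemma vset_eq : vset D K = [set N; v1 K N; v2 K N].
Proof.
apply/setP => M; rewrite !inE; apply/idP/idP.
  by case/vcases => ->; rewrite eqxx ?orbT.
by case/orP => [/orP[]|] /eqP ->; [exact: HN | exact: v1_in | exact: v2_in].
Qed.

Lemma cross_v : cross (psub (coord (v1 K N)) (coord N))
                      (psub (coord (v2 K N)) (coord N)) = dblarea D K.
Proof.
rewrite /v1 /v2 /dblarea /vx; have := kNP HN; set k := kN K N => <-.
case: (I3_cases k) => ->; rewrite ?ordS0 ?ordS1 ?ordS2 /cross /psub /=; ring.
Qed.

End Tri.

Lemma coord_inj : injective coord. Proof. by case: HDc. Qed.

Definition E1 K N : {set Vt} := [set N; v1 K N].
Definition E2 K N : {set Vt} := [set N; v2 K N].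

Lemma edges_at K N (F : {set Vt}) : N \in vset D K -> F \subset vset D K -> N \in F ->
  #|F| = 2%N -> F = E1 K N \/ F = E2 K N.
Proof.
move=> HN sF NF c2.
have [x [y [xy Fe]]] : exists x y, x != y /\ F = [set x; y].
  by apply/(cards2P F); rewrite c2.
have [M [MN FM]] : exists M, M != N /\ F = [set N; M].
  move: NF; rewrite Fe !inE => /orP[] /eqP ->.
    by exists y; split; [rewrite eq_sym|].
  by exists x; split=> //; rewrite finset.setUC.
have : M \in vset D K by apply: (fintype.subsetP sF); rewrite FM !inE eqxx orbT.
case/(vcases HN) => MM; first by rewrite MM eqxx in MN.
  by left; rewrite FM MM.
by right; rewrite FM MM.
Qed.

Lemma card_pair (N A : Vt) : N != A -> #|[set N; A]| = 2%N.
Proof. by move=> h; rewrite cards2 h. Qed.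

Lemma ends (F : {set Vt}) N A : F = [set N; A] -> N != A ->
  (ea D F = N /\ eb D F = A) \/ (ea D F = A /\ eb D F = N).
Proof.
move=> FE NA.
have c2 : #|F| = 2%N by rewrite FE card_pair.
have Fab := F2 c2.
set a := ea D F in Fab *; set b := eb D F in Fab *.
have ab : a != b.
  by apply/negP => /eqP e; move: c2; rewrite Fab e finset.setUid cards1.
have : a \in F by rewrite Fab !inE eqxx.
have : b \in F by rewrite Fab !inE eqxx orbT.
rewrite [in X in b \in X]FE [in X in a \in X]FE !inE => /orP[] /eqP hb /orP[] /eqP ha.
- by rewrite ha hb eqxx in ab.
- by right.
- by left.
- by rewrite ha hb eqxx in ab.
Qed.

Lemma otherendE (F : {set Vt}) N A : F = [set N; A] -> N != A ->
  otherend D N F = A.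
Proof.
move=> FE NA; rewrite /otherend.
case: (ends FE NA) => [[-> ->]|[-> ->]]; first by rewrite eqxx.
by rewrite (negbTE NA).
Qed.

Lemma nF_perp (F : {set Vt}) N A : F = [set N; A] -> N != A -> isIE D F ->
  dot (nF D F) (psub (coord A) (coord N)) = 0.
Proof.
move=> FE NA IE; have [_ h] := nFP IE.
case: (ends FE NA) => [[e1 e2]|[e1 e2]]; rewrite e1 e2 in h => //.
by move: h; rewrite /dot /psub /= => h; lra.
Qed.

Lemma dot_pos (p : R * R) : p != (0, 0) -> 0 < dot p p.
Proof.
case: p => x y; rewrite /dot /= => h.
have hx : 0 <= x * x by rewrite -expr2 sqr_ge0.
have hy : 0 <= y * y by rewrite -expr2 sqr_ge0.
rewrite lt_neqAle addr_ge0 // andbT eq_sym paddr_eq0 // !mulf_eq0 !orbb.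
by apply: contra h => /andP[/eqP -> /eqP ->].
Qed.

Lemma elen_pos (F : {set Vt}) : #|F| = 2%N -> 0 < elen D F.
Proof.
move=> c2; rewrite /elen /pnorm sqrtr_gt0; apply: dot_pos.
have Fab := F2 c2.
have ab : ea D F != eb D F.
  by apply/negP => /eqP e; move: c2; rewrite Fab e finset.setUid cards1.
apply/negP => /eqP h.
have : coord (eb D F) = coord (ea D F).
  move: h; rewrite /psub; case: (coord (eb D F)) => p q; case: (coord (ea D F)) => p' q'.
  by case => /eqP; rewrite subr_eq0 => /eqP -> /eqP; rewrite subr_eq0 => /eqP ->.
by move/coord_inj => e; rewrite e eqxx in ab.
Qed.


Lemma cross_id1 (a n b : R * R) :
  cross a n * cross a b = dot a a * dot n b - dot a n * dot a b.
Proof. rewrite /cross /dot; ring. Qed.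
Lemma cross_id2 (a n : R * R) :
  cross a n * cross a n + dot a n * dot a n = dot a a * dot n n.
Proof. rewrite /cross /dot; ring. Qed.
Lemma dot_sym (a b : R * R) : dot a b = dot b a.
Proof. rewrite /dot; ring. Qed.

Section Sign.
Variables (K : El) (N A B : Vt).
Hypotheses (HN : N \in vset D K) (HA : A \in vset D K) (HB : B \in vset D K)
  (NA : N != A) (NB : N != B) (AB : A != B).

Lemma vcases3 M : M \in vset D K -> [\/ M = N, M = A | M = B].
Proof.
have [d1 d2 d12] := vdist HN.
case/(vcases HN) => ->; case/(vcases HN): HA => hA; case/(vcases HN): HB => hB;
  try (by constructor 1); try (by constructor 2; rewrite hA);
  try (by constructor 3; rewrite hB);
  by exfalso; move: NA NB AB d1 d2 d12; rewrite ?hA ?hB ?eqxx.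
Qed.

Lemma isPlusE : isIE D [set N; A] -> isPlus D K [set N; A] =
  (dot (nF D [set N; A]) (coord B) < dot (nF D [set N; A]) (coord N)).
Proof.
move=> IE; have hp := nF_perp (erefl _) NA IE.
set n := nF D [set N; A] in hp *.
have eA : dot n (coord A) = dot n (coord N).
  by move: hp; rewrite /dot /psub /= => h; lra.
apply/idP/idP.
  case/imsetP: HB => iB _ eB; case/imsetP: HN => iN _ eN.
  move/forallP/(_ iB)/forallP/(_ iN)/implyP; rewrite /vx -eB -eN.
  apply; rewrite !inE eqxx orTb andbT.
  by rewrite negb_or eq_sym NB eq_sym AB.
move=> h; apply/forallP => i; apply/forallP => j; apply/implyP.
rewrite /vx !inE => /andP[hi hj].
have ei : ev K i = B.
  by case: (vcases3 (in_vset K i)) => e; rewrite e ?eqxx ?orbT // in hi.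
rewrite ei; case/orP: hj => /eqP ->; by rewrite ?eA.
Qed.

Lemma sign_lemma : isIE D [set N; A] ->
  cross (psub (coord A) (coord N)) (psub (coord B) (coord N)) != 0 ->
  sgnN D N [set N; A] * epsKF D K [set N; A] =
  if 0 < cross (psub (coord A) (coord N)) (psub (coord B) (coord N)) then -1 else 1.
Proof.
move=> IE hY.
rewrite /sgnN /epsKF isPlusE // (otherendE (erefl _) NA).
have hp := nF_perp (erefl _) NA IE.
have [n1 _] := nFP IE.
set n := nF D [set N; A] in hp n1 *.
set a := psub (coord A) (coord N) in hp hY *.
set b := psub (coord B) (coord N) in hY *.
have e1 := cross_id1 a n b; have e2 := cross_id2 a n.
have ha : dot a n = 0 by rewrite dot_sym.
rewrite ha mul0r subr0 in e1.
rewrite ha mul0r addr0 n1 mulr1 in e2.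
have hZ : (dot n (coord B) < dot n (coord N)) = (dot n b < 0).
  by rewrite /b /dot /psub /=; apply/idP/idP => h; lra.
rewrite hZ.
have aP : 0 < dot a a.
  apply: dot_pos; apply: contra hY => /eqP ->; by rewrite /cross /= !mul0r subrr.
move: e1 e2 aP hY.
set X := cross a n; set Y := cross a b; set Z := dot n b; set P := dot a a.
move=> e1 e2 aP hY.
have hY' : Y < 0 \/ 0 < Y.
  by move: hY; rewrite neq_lt => /orP[]; [left|right].
have hX' : X < 0 \/ 0 < X.
  have : X != 0 by apply/eqP => X0; move: e2; rewrite X0 mul0r => P0; lra.
  by rewrite neq_lt => /orP[]; [left|right].
case: (ltP 0 X) => hX; case: (ltP Z 0) => hZ'; case: (ltP 0 Y) => hYp;
  rewrite ?mulr1 ?mulrN1 ?opprK //; exfalso; case: hY' => hY'; case: hX' => hX'; nra.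
Qed.

End Sign.

Lemma sum_if1 (I : finType) (P : pred I) (j : I) (g : I -> R) :
  \sum_(i | P i) (if i == j then g i else 0) = if P j then g j else 0.
Proof.
rewrite big_mkcond (bigD1 j) //= eqxx big1 ?addr0 // => i /negbTE ->.
by case: ifP.
Qed.

Lemma locv_hat M K K' M' : M' \in vset D K' ->
  locv D (hatK D M K) K' M' = if (K' == K) && (M' == M) then 1 else 0.
Proof.
case/imsetP => j _ ->; rewrite /locv /hatK.
rewrite (big_pred1 j) // => i /=; exact: (inj_eq (@ev_inj K')).
Qed.

Lemma jumpv_hat M K (F : {set Vt}) M' : M' \in F ->
  jumpv D (hatK D M K) F M' =
  if (F \subset vset D K) && (M' == M) then epsKF D K F else 0.
Proof.
move=> MF; rewrite /jumpv.
rewrite (eq_bigr (fun K' => if K' == K then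
    (if M' == M then epsKF D K' F else 0) else 0)); last first.
  move=> K' sF; rewrite locv_hat; last exact: (fintype.subsetP sF).
  by case: (K' == K); case: (M' == M) => /=; rewrite ?mulr1 ?mulr0.
rewrite sum_if1; by case: (F \subset vset D K); case: (M' == M).
Qed.

Lemma bform_hat (mu : Mfun R Vt) M K :
  bform D mu (hatK D M K) = \sum_(F | isIE D F)
    (elen D F / 2 * (if (F \subset vset D K) && (M \in F)
                      then mu F M * epsKF D K F else 0)).
Proof.
apply: eq_bigr => F _; congr (_ * _).
rewrite (eq_bigr (fun M' => if M' == M then
   (if F \subset vset D K then mu F M * epsKF D K F else 0) else 0)); last first.
  move=> M' HM'; rewrite jumpv_hat //.
  case: eqP => [->|_]; rewrite ?andbT ?andbF ?mulr0 //.
  by case: ifP; rewrite ?mulr0.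
rewrite sum_if1; by case: (F \subset vset D K); case: (M \in F).
Qed.

Lemma isIE_card (F : {set Vt}) : isIE D F -> #|F| = 2%N.
Proof. by case/andP => /eqP. Qed.

Lemma E12_prop K N : N \in vset D K ->
  [/\ E1 K N \subset vset D K, E2 K N \subset vset D K, N \in E1 K N,
      N \in E2 K N & E2 K N != E1 K N].
Proof.
move=> HN; have [d1 d2 d12] := vdist HN.
split.
- by apply/fintype.subsetP => x; rewrite !inE => /orP[]/eqP ->; [|exact: v1_in].
- by apply/fintype.subsetP => x; rewrite !inE => /orP[]/eqP ->; [|exact: v2_in].
- by rewrite !inE eqxx.
- by rewrite !inE eqxx.
- apply/negP => /eqP e.
  have : v2 K N \in E1 K N by rewrite -e !inE eqxx orbT.
  by rewrite !inE eq_sym (negbTE d2) eq_sym (negbTE d12).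
Qed.

Lemma tri_eq (mu : Mfun R Vt) K N : N \in vset D K ->
  bform D mu (hatK D N K) = 0 ->
  (if isIE D (E1 K N) then elen D (E1 K N) / 2 * (mu (E1 K N) N * epsKF D K (E1 K N)) else 0)
  + (if isIE D (E2 K N) then elen D (E2 K N) / 2 * (mu (E2 K N) N * epsKF D K (E2 K N)) else 0)
  = 0.
Proof.
move=> HN; rewrite bform_hat big_mkcond /=.
have [s1 s2 n1 n2 e21] := E12_prop HN.
rewrite (bigD1 (E1 K N)) //= (bigD1 (E2 K N)) //= big1 ?addr0.
  by rewrite s1 s2 n1 n2 /=.
move=> F /andP[h1 h2]; case: ifP => // IE.
case: ifP; rewrite ?mulr0 // => /andP[sF NF].
by case: (edges_at HN sF NF (isIE_card IE)) => e; [move: h1|move: h2]; rewrite e eqxx.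
Qed.


Lemma alg2 (s1 s2 t1 t2 e1 e2 m1 m2 : R) : t1 * t1 = 1 -> t2 * t2 = 1 ->
  s1 * t1 = - (s2 * t2) -> e1 / 2 * (m1 * t1) + e2 / 2 * (m2 * t2) = 0 ->
  s1 * (e1 * m1) = s2 * (e2 * m2).
Proof.
move=> h1 h2 hs heq.
have h : e1 * m1 * t1 = - (e2 * m2 * t2).
  have : e1 * m1 * t1 + e2 * m2 * t2 = 2 * (e1 / 2 * (m1 * t1) + e2 / 2 * (m2 * t2)).
    by field.
  by rewrite heq mulr0 => /eqP; rewrite addr_eq0 => /eqP.
transitivity ((s1 * t1) * (e1 * m1 * t1)).
  transitivity (s1 * (e1 * m1) * (t1 * t1)); first by rewrite h1 mulr1.
  by ring.
rewrite hs h; transitivity (s2 * (e2 * m2) * (t2 * t2)); first by ring.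
by rewrite h2 mulr1.
Qed.

Lemma alg1 (s1 t1 e1 m1 : R) : t1 * t1 = 1 -> e1 / 2 * (m1 * t1) = 0 ->
  s1 * (e1 * m1) = 0.
Proof.
move=> h1 heq.
have : e1 * m1 = 2 * (e1 / 2 * (m1 * t1)) * t1.
  transitivity (e1 * m1 * (t1 * t1)); first by rewrite h1 mulr1.
  by field.
by rewrite heq mulr0 mul0r => ->; rewrite mulr0.
Qed.

Lemma sq_sign (b : bool) : (if b then 1 else -1 : R) * (if b then 1 else -1) = 1.
Proof. by case: b; rewrite ?mulr1 ?mulrNN ?mulr1. Qed.

Definition yv (mu : Mfun R Vt) N F := sgnN D N F * (elen D F * mu F N).

Lemma tri_rel (mu : Mfun R Vt) K N : N \in vset D K ->
  bform D mu (hatK D N K) = 0 ->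
  [/\ isIE D (E1 K N) -> isIE D (E2 K N) -> yv mu N (E1 K N) = yv mu N (E2 K N),
      isIE D (E1 K N) -> ~~ isIE D (E2 K N) -> yv mu N (E1 K N) = 0 &
      ~~ isIE D (E1 K N) -> isIE D (E2 K N) -> yv mu N (E2 K N) = 0].
Proof.
move=> HN H0; have Heq := tri_eq HN H0.
have [d1 d2 d12] := vdist HN.
have cv := cross_v HN; have dn := dbl_neq0 K.
have t1 : epsKF D K (E1 K N) * epsKF D K (E1 K N) = 1 by rewrite /epsKF sq_sign.
have t2 : epsKF D K (E2 K N) * epsKF D K (E2 K N) = 1 by rewrite /epsKF sq_sign.
rewrite /yv; split => I1 I2; rewrite ?I1 ?I2 ?(negbTE I1) ?(negbTE I2) /= in Heq.
- apply: alg2 Heq => //.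
  have c21 : cross (psub (coord (v2 K N)) (coord N)) (psub (coord (v1 K N)) (coord N)) = - dblarea D K.
    by rewrite -cv /cross; ring.
  have c21n : cross (psub (coord (v2 K N)) (coord N)) (psub (coord (v1 K N)) (coord N)) != 0.
    by rewrite c21 oppr_eq0.
  have c12n : cross (psub (coord (v1 K N)) (coord N)) (psub (coord (v2 K N)) (coord N)) != 0.
    by rewrite cv.
  have d21 : v2 K N != v1 K N by rewrite eq_sym.
  rewrite (@sign_lemma K N (v1 K N) (v2 K N) HN (v1_in K N) (v2_in K N) d1 d2 d12 I1 c12n).
  rewrite (@sign_lemma K N (v2 K N) (v1 K N) HN (v2_in K N) (v1_in K N) d2 d1 d21 I2 c21n).
  rewrite c21.
  rewrite cv oppr_gt0.
  case: (ltrgtP 0 (dblarea D K)) => h; rewrite ?opprK //.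
  by move: dn; rewrite -h eqxx.
- by apply: (alg1 _ t1); move: Heq; rewrite addr0.
- by apply: (alg1 _ t2); move: Heq; rewrite add0r.
Qed.

Lemma ovl K K' (N : Vt) (w p : R * R) : K != K' -> tri D K p -> tri D K' p ->
  (forall M, M \in vset D K -> M \in vset D K' ->
     cross (psub (coord M) (coord N)) w = 0) ->
  cross (psub p (coord N)) w = 0.
Proof.
move=> KK' hK hK' hM.
have : (tri D K `&` tri D K')%classic p by split.
rewrite tri_cap // => -[l [l0 [l1 ->]]].
set s := [seq coord M | M <- enum (vset D K :&: vset D K')].
have h0 : \sum_(i < size s) l i * cross (psub (nth (0,0) s i) (coord N)) w = 0.
  apply: big1 => i _.
  have : nth (0,0) s i \in s by apply: mem_nth.
  case/mapP => M; rewrite mem_enum inE => /andP[h1 h2] ->.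
  by rewrite hM // mulr0.
rewrite /cross /psub /= in h0 *; rewrite -[X in _ = X]h0.
set N1 := (coord N).1; set N2 := (coord N).2.
rewrite [RHS](eq_bigr (fun i : 'I_(size s) => (l i * (nth (0,0) s i).1) * w.2
   - (l i * (nth (0,0) s i).2) * w.1 - (N1 * w.2 - N2 * w.1) * l i)); last first.
  by move=> i _; ring.
by rewrite !sumrB -!mulr_suml -mulr_sumr l1; ring.
Qed.

Lemma tri_pt K N (al be : R) : N \in vset D K -> 0 <= al -> 0 <= be -> al + be <= 1 ->
  tri D K ((coord N).1 + al * (psub (coord (v1 K N)) (coord N)).1
                        + be * (psub (coord (v2 K N)) (coord N)).1,
           (coord N).2 + al * (psub (coord (v1 K N)) (coord N)).2
                        + be * (psub (coord (v2 K N)) (coord N)).2).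
Proof.
move=> HN a0 b0 ab1; rewrite /v1 /v2; have := kNP HN.
set k := kN K N => <-.
have c0 : 0 <= 1 - al - be by lra.
rewrite /tri /hull /vx /psub /=.
case: (I3_cases k) => ->; rewrite ?ordS0 ?ordS1 ?ordS2.
- exists (fun n => nth 0 [:: 1 - al - be; al; be] n); split.
    by case=> [|[|[|n]]] //=; rewrite nth_nil.
  split; first by rewrite !big_ord_recl big_ord0 /=; ring.
  by congr pair; rewrite !big_ord_recl big_ord0 /=; ring.
- exists (fun n => nth 0 [:: be; 1 - al - be; al] n); split.
    by case=> [|[|[|n]]] //=; rewrite nth_nil.
  split; first by rewrite !big_ord_recl big_ord0 /=; ring.
  by congr pair; rewrite !big_ord_recl big_ord0 /=; ring.
- exists (fun n => nth 0 [:: al; be; 1 - al - be] n); split.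
    by case=> [|[|[|n]]] //=; rewrite nth_nil.
  split; first by rewrite !big_ord_recl big_ord0 /=; ring.
  by congr pair; rewrite !big_ord_recl big_ord0 /=; ring.
Qed.

Definition lab K N A B := N \in vset D K /\
  ((A = v1 K N /\ B = v2 K N) \/ (A = v2 K N /\ B = v1 K N)).

Lemma lab_facts K N A B : lab K N A B ->
  [/\ N \in vset D K, A \in vset D K, B \in vset D K, N != A & N != B] /\
  [/\ A != B, vset D K = [set N; A; B] &
      cross (psub (coord A) (coord N)) (psub (coord B) (coord N)) != 0].
Proof.
case=> HN hl; have [d1 d2 d12] := vdist HN.
have cv := cross_v HN; have dn := dbl_neq0 K.
case: hl => [[-> ->]|[-> ->]].
  by split; split; [exact HN| exact: v1_in | exact: v2_in | exact d1 | exact d2 | exact d12 | exact: vset_eq HN | by rewrite cv].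
split; split; [exact HN| exact: v2_in | exact: v1_in | exact d2 | exact d1 | by rewrite eq_sym | | ].
  by rewrite (vset_eq HN); apply/setP => x; rewrite !inE -!orbA (orbC (x == v1 K N)).
have -> : cross (psub (coord (v2 K N)) (coord N)) (psub (coord (v1 K N)) (coord N))
   = - dblarea D K by rewrite -cv /cross; ring.
by rewrite oppr_eq0.
Qed.

Lemma lab_cases K N A B M : lab K N A B -> M \in vset D K ->
  [\/ M = N, M = A | M = B].
Proof.
move=> hl; have [[HN HA HB NA NB] [AB _ _]] := lab_facts hl.
exact: (@vcases3 K N A B HN HA HB NA NB AB).
Qed.

Lemma tri_pt2 K N A B (al be : R) : lab K N A B -> 0 <= al -> 0 <= be -> al + be <= 1 ->
  tri D K ((coord N).1 + al * (psub (coord A) (coord N)).1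
                        + be * (psub (coord B) (coord N)).1,
           (coord N).2 + al * (psub (coord A) (coord N)).2
                        + be * (psub (coord B) (coord N)).2).
Proof.
case=> HN [[-> ->]|[-> ->]] a0 b0 ab; first exact: tri_pt.
have E : forall x y z : R, x + y + z = x + z + y by move=> *; ring.
by rewrite E (E (coord N).2); apply: tri_pt => //; rewrite addrC.
Qed.

Lemma ov1 K1 K2 N A B1 B2 : K1 != K2 -> lab K1 N A B1 -> lab K2 N A B2 ->
  cross (psub (coord A) (coord N)) (psub (coord B1) (coord N)) < 0 ->
  cross (psub (coord A) (coord N)) (psub (coord B2) (coord N)) < 0 -> False.
Proof.
move=> K12 l1 l2.
have [[HN1 HA1 HB1 NA NB1] [AB1 V1 _]] := lab_facts l1.
have [[HN2 HA2 HB2 _ NB2] [AB2 V2 _]] := lab_facts l2.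
set a := psub (coord A) (coord N); set b1 := psub (coord B1) (coord N);
set b2 := psub (coord B2) (coord N) => c1n c2n.
set c1 := cross a b1 in c1n; set c2 := cross a b2 in c2n.
set xi := cross b1 b2 / c2; set eta := c1 / c2.
have c2n0 : c2 != 0 by rewrite lt_eqF.
have etap : 0 < eta by rewrite /eta -mulrNN -invrN divr_gt0 // oppr_gt0.
have hb : b1.1 = xi * a.1 + eta * b2.1 /\ b1.2 = xi * a.2 + eta * b2.2.
  rewrite /xi /eta /c1 /c2 /cross; split; field; move: c2n0; by rewrite /c2 /cross.
set be := 1 / (4 * (1 + `|xi| + eta)).
have hpos : 0 < 1 + `|xi| + eta by have := normr_ge0 xi; lra.
have bep : 0 < be by rewrite /be divr_gt0 //; lra.
have beq : be + be * `|xi| + be * eta = 1 / 4.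
  by rewrite /be; field; rewrite gt_eqF.
have hx1 : be * xi <= be * `|xi| by rewrite ler_pM2l // ler_norm.
have hx2 : - (be * `|xi|) <= be * xi by rewrite -mulrN ler_pM2l // lerNnormlW.
have hxa : 0 <= be * `|xi| by rewrite mulr_ge0 // ltW.
have hea : 0 < be * eta by rewrite mulr_gt0.
have t1 := @tri_pt2 K1 N A B1 (1/2) be l1 ltac:(lra) (ltW bep) ltac:(lra).
have t2 := @tri_pt2 K2 N A B2 (1/2 + be * xi) (be * eta) l2 ltac:(lra) (ltW hea) ltac:(lra).
set p := (_, _) in t1.
have ep : p = ((coord N).1 + (1 / 2 + be * xi) * a.1 + be * eta * b2.1,
               (coord N).2 + (1 / 2 + be * xi) * a.2 + be * eta * b2.2).
  rewrite /p; case: hb => -> ->; congr pair; ring.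
rewrite -ep in t2.
have := @ovl K1 K2 N a p K12 t1 t2.
have : cross (psub p (coord N)) a = - be * c1.
  by rewrite /p /c1 /cross /psub /=; ring.
move=> -> h.
have : - be * c1 = 0.
  apply: h => M h1 h2.
  case: (lab_cases l1 h1) => eM.
  - by rewrite eM /psub /cross /=; ring.
  - by rewrite eM /a /cross; ring.
  - exfalso; rewrite eM in h2.
    case: (lab_cases l2 h2) => e.
    + by move: NB1; rewrite e eqxx.
    + by move: AB1; rewrite e eqxx.
    + by move: (vset_neq K12); rewrite V1 V2 e eqxx.
move/eqP; rewrite mulf_eq0 oppr_eq0 => /orP[] /eqP h0.
  by move: bep; rewrite h0 ltxx.
by move: c1n; rewrite h0 ltxx.
Qed.

Lemma IE_pair (F : {set Vt}) N : isIE D F -> N \in F -> exists A, N != A /\ F = [set N; A].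
Proof.
move=> /isIE_card c2 NF.
have [x [y [xy Fe]]] : exists x y, x != y /\ F = [set x; y].
  by apply/(cards2P F); rewrite c2.
move: NF; rewrite Fe !inE => /orP[] /eqP ->.
  by exists y.
by exists x; split; [rewrite eq_sym | rewrite finset.setUC].
Qed.

Lemma pair_eq (N A A' : Vt) : N != A -> [set N; A] = [set N; A'] -> A = A'.
Proof.
move=> NA e; have : A \in [set N; A'] by rewrite -e !inE eqxx orbT.
by rewrite !inE eq_sym (negbTE NA) => /eqP.
Qed.

Lemma two_tris (F : {set Vt}) : isIE D F ->
  exists K1 K2, [/\ K1 != K2, F \subset vset D K1 & F \subset vset D K2].
Proof.
case/andP => _ /eqP c2.
have [x [y [xy Fe]]] : exists x y, x != y /\ [set K | F \subset vset D K] = [set x; y].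
  by apply/cards2P; rewrite c2.
have hx : x \in [set K | F \subset vset D K] by rewrite Fe !inE eqxx.
have hy : y \in [set K | F \subset vset D K] by rewrite Fe !inE eqxx orbT.
by exists x, y; split => //; [move: hx | move: hy]; rewrite inE.
Qed.

Lemma edge_lab K N (F : {set Vt}) : isIE D F -> N \in F -> F \subset vset D K ->
  exists A B, F = [set N; A] /\ lab K N A B.
Proof.
move=> IE NF sF.
have HN : N \in vset D K by apply: (fintype.subsetP sF).
case: (edges_at HN sF NF (isIE_card IE)) => ->.
  by exists (v1 K N), (v2 K N); split => //; split => //; left.
by exists (v2 K N), (v1 K N); split => //; split => //; right.
Qed.

Lemma ccw (F : {set Vt}) N : isIE D F -> N \in F ->
  exists K A B, [/\ F \subset vset D K, F = [set N; A], lab K N A B &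
     0 < cross (psub (coord A) (coord N)) (psub (coord B) (coord N))].
Proof.
move=> IE NF; have [K1 [K2 [K12 s1 s2]]] := two_tris IE.
have [A1 [B1 [e1 l1]]] := edge_lab IE NF s1.
have [A2 [B2 [e2 l2]]] := edge_lab IE NF s2.
have [[_ _ _ NA1 _] [_ _ c1]] := lab_facts l1.
have [[_ _ _ NA2 _] [_ _ c2]] := lab_facts l2.
have eA : A2 = A1 by apply: pair_eq NA2 _; rewrite -e1 -e2.
rewrite eA in l2 c2.
case: (ltrgtP 0 (cross (psub (coord A1) (coord N)) (psub (coord B1) (coord N)))) => h1.
- by exists K1, A1, B1.
- case: (ltrgtP 0 (cross (psub (coord A1) (coord N)) (psub (coord B2) (coord N)))) => h2.
  + by exists K2, A1, B2; rewrite -e1.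
  + by exfalso; apply: (ov1 K12 l1 l2).
  + by move: c2; rewrite -h2 eqxx.
- by move: c1; rewrite -h1 eqxx.
Qed.

Definition dF N (F : {set Vt}) := psub (coord (otherend D N F)) (coord N).
Definition closedS N (S : pred {set Vt}) :=
  (forall F, S F -> isIE D F /\ N \in F) /\
  (forall F K, S F -> F \subset vset D K -> S (E1 K N) /\ S (E2 K N)).
Definition Hp (w d : R * R) := (0 < cross d w) || ((cross d w == 0) && (dot d w < 0)).
Definition negp (u : R * R) : R * R := (- u.1, - u.2).

Lemma dot_ge0 (d : R * R) : 0 <= dot d d.
Proof. by rewrite /dot addr_ge0 // -expr2 sqr_ge0. Qed.

Lemma id1 (d e f w : R * R) : cross d f * cross e w = cross d e * cross f w + cross d w * cross e f.
Proof. rewrite /cross. ring. Qed.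
Lemma id3 (d e w : R * R) : cross d e * dot e w = cross d w * dot e e - dot d e * cross e w.
Proof. rewrite /cross /dot. ring. Qed.

Lemma hp_ge w d : Hp w d -> 0 <= cross d w.
Proof. by case/orP => [/ltW //|/andP[/eqP -> _]]. Qed.

Lemma TR w d e f : Hp w d -> Hp w e -> Hp w f -> 0 < cross d e -> 0 < cross e f ->
  0 < cross d f.
Proof.
move=> Hd He Hf de ef.
have dw := hp_ge Hd; have fw := hp_ge Hf.
have ew : 0 < cross e w.
  case/orP: He => // /andP[/eqP c0 dn]; exfalso.
  have i3 := id3 d e w; rewrite c0 mulr0 subr0 in i3.
  have : cross d e * dot e w < 0 by rewrite pmulr_rlt0.
  have := mulr_ge0 dw (dot_ge0 e); lra.
case: (ltP 0 (cross d f)) => // hdf; exfalso.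
have i1 := id1 d e f w.
have h1 := mulr_ge0 (ltW de) fw; have h2 := mulr_ge0 dw (ltW ef).
have h3 : cross d f * cross e w <= 0 by rewrite mulr_le0_ge0 // ltW.
have h4 : cross d e * cross f w = 0 by lra.
have fw0 : cross f w = 0.
  by move/eqP: h4; rewrite mulf_eq0 gt_eqF //= => /eqP.
have fd : dot f w < 0.
  by case/orP: Hf; [rewrite fw0 ltxx | case/andP].
have i3 := id3 e f w; rewrite fw0 mulr0 subr0 in i3.
have : cross e f * dot f w < 0 by rewrite pmulr_rlt0.
have := mulr_ge0 (ltW ew) (dot_ge0 f); lra.
Qed.

Lemma hp_dich u d : u != (0, 0) -> d != (0, 0) -> Hp u d || Hp (negp u) d.
Proof.
move=> u0 d0; rewrite /Hp.
have -> : cross d (negp u) = - cross d u by rewrite /cross /negp /=; ring.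
have -> : dot d (negp u) = - dot d u by rewrite /dot /negp /=; ring.
case: (ltrgtP 0 (cross d u)) => h.
- by rewrite ?h /=.
- by rewrite oppr_gt0 h orbT.
have i2 := cross_id2 d u; rewrite -h mulr0 add0r in i2.
have : 0 < dot d d * dot u u by rewrite mulr_gt0 // dot_pos.
rewrite -i2 -h oppr0 ltxx eqxx /= oppr_lt0 => hp.
case: (ltrgtP 0 (dot d u)) => h'; rewrite ?orbT //.
by move: hp; rewrite -h' mulr0 ltxx.
Qed.

Lemma card_vset K : #|vset D K| = 3%N.
Proof. by rewrite card_imset ?card_ord //; exact: ev_inj. Qed.

Lemma labE K N A B : lab K N A B ->
  ([set N; A] = E1 K N \/ [set N; A] = E2 K N) /\
  ([set N; B] = E1 K N \/ [set N; B] = E2 K N).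
Proof. by case=> _ [[-> ->]|[-> ->]]; split; [left|right|right|left]. Qed.

Lemma lab_S N S K A B F : closedS N S -> S F -> F \subset vset D K -> lab K N A B ->
  S [set N; A] /\ S [set N; B].
Proof.
move=> [_ cl] SF sF hl; have [h1 h2] := cl F K SF sF.
by case: (labE hl) => [[]->[]->].
Qed.

Lemma dF_pair N A : N != A -> dF N [set N; A] = psub (coord A) (coord N).
Proof. by move=> NA; rewrite /dF (otherendE (erefl _) NA). Qed.

Lemma psub_neq0 (A N : Vt) : N != A -> psub (coord A) (coord N) != (0, 0).
Proof.
move=> NA; apply/negP => /eqP h.
have : coord A = coord N.
  move: h; rewrite /psub; case: (coord A) => p q; case: (coord N) => p' q'.
  by case => /eqP; rewrite subr_eq0 => /eqP -> /eqP; rewrite subr_eq0 => /eqP ->.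
by move/coord_inj => e; move: NA; rewrite e eqxx.
Qed.

Lemma core N S w : closedS N S -> (exists F0, S F0 && Hp w (dF N F0)) ->
  exists K A B, [/\ lab K N A B, S [set N; A], S [set N; B],
    Hp w (psub (coord A) (coord N)) /\ ~~ Hp w (psub (coord B) (coord N)) &
    0 < cross (psub (coord A) (coord N)) (psub (coord B) (coord N))].
Proof.
move=> hS [F0 CF0].
set C := fun F => S F && Hp w (dF N F).
set above := fun F => [set G | C G && (0 < cross (dF N F) (dF N G))].
case: (@arg_minnP _ F0 C (fun F => #|above F|) CF0) => Fs /andP[SFs HFs] hmin.
have [IE NF] := hS.1 _ SFs.
have [K [A [B [sF eF hl hc]]]] := ccw IE NF.
have [[_ _ _ NA NB] _] := lab_facts hl.
have [SA SB] := lab_S hS SFs sF hl.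
have dFs : dF N Fs = psub (coord A) (coord N) by rewrite eF dF_pair.
exists K, A, B; split => //; split; first by rewrite -dFs.
apply/negP => HB.
set G := [set N; B].
have dG : dF N G = psub (coord B) (coord N) by rewrite dF_pair.
have CG : C G by rewrite /C SB dG.
have := hmin G CG; rewrite leqNgt => /negP; apply.
apply: proper_card; apply/properP; split.
  apply/fintype.subsetP => H; rewrite !inE => /andP[CH hGH]; rewrite CH /=.
  case/andP: CH => _ HH.
  by apply: (TR (w := w) (e := dF N G)); [exact HFs | rewrite dG | exact HH | rewrite dFs dG | exact hGH].
exists G; first by rewrite !inE CG dFs dG hc.
by rewrite !inE CG /= /cross mulrC subrr ltxx.
Qed.

Lemma cover N S (u : R * R) : closedS N S -> (exists F0, S F0) ->
  exists K A B, [/\ lab K N A B, S [set N; A], S [set N; B] &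
    exists al be : R, [/\ 0 <= al, 0 <= be,
       u.1 = al * (psub (coord A) (coord N)).1 + be * (psub (coord B) (coord N)).1 &
       u.2 = al * (psub (coord A) (coord N)).2 + be * (psub (coord B) (coord N)).2]].
Proof.
move=> hS [F0 SF0].
have [IE0 NF0] := hS.1 _ SF0.
case: (eqVneq u (0,0)) => [u0|u0].
  have [K1 [_ [_ s1 _]]] := two_tris IE0.
  have [A [B [e1 hl]]] := edge_lab IE0 NF0 s1.
  have [SA SB] := lab_S hS SF0 s1 hl.
  exists K1, A, B; split => //; exists 0, 0; rewrite u0 /=.
  by split; rewrite ?lexx // !mul0r addr0.
case: (boolP [exists F, S F && Hp u (dF N F)]) => [/existsP hex|hno].
  have [K [A [B [hl SA SB [HA HB] hc]]]] := core hS hex.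
  exists K, A, B; split => //.
  move: HA HB hc.
  set a := psub (coord A) (coord N); set b := psub (coord B) (coord N) => HA HB hc.
  have cn : cross a b != 0 by rewrite gt_eqF.
  exists (cross u b / cross a b), (cross a u / cross a b); split.
  - rewrite divr_ge0 // ?(ltW hc) //.
    have : ~~ (0 < cross b u) by apply: contra HB => h; rewrite /Hp h.
    rewrite -leNgt => h; have -> : cross u b = - cross b u by rewrite /cross; ring.
    by rewrite oppr_ge0.
  - by rewrite divr_ge0 ?(ltW hc) // hp_ge.
  - by move: cn; rewrite /cross => cn; field.
  - by move: cn; rewrite /cross => cn; field.
exfalso.
have hno' : forall F, S F -> ~~ Hp u (dF N F).
  by move=> F SF; apply/negP => h; move/existsP: hno; apply; exists F; rewrite SF h.
have [A0 [NA0 e0]] := IE_pair IE0 NF0.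
have H0 : Hp (negp u) (dF N F0).
  have := hp_dich u0 (_ : dF N F0 != (0,0)).
  rewrite e0 dF_pair // => /(_ (psub_neq0 NA0)).
  by rewrite -dF_pair // -e0 (negbTE (hno' _ SF0)).
have [K [A [B [hl SA SB [HA HB] hc]]]] := core (w := negp u) hS (ex_intro _ F0 (introT andP (conj SF0 H0))).
have [[_ _ _ NA NB] _] := lab_facts hl.
have := hno' _ SB; rewrite dF_pair // => hb.
have := hp_dich u0 (psub_neq0 NB).
by rewrite (negbTE hb) (negbTE HB).
Qed.

Lemma ov2 K K' N A B A' B' (al be : R) : K != K' -> lab K N A B -> lab K' N A' B' ->
  0 <= al -> 0 <= be ->
  (psub (coord A) (coord N)).1 + (psub (coord B) (coord N)).1 =
     al * (psub (coord A') (coord N)).1 + be * (psub (coord B') (coord N)).1 ->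
  (psub (coord A) (coord N)).2 + (psub (coord B) (coord N)).2 =
     al * (psub (coord A') (coord N)).2 + be * (psub (coord B') (coord N)).2 ->
  False.
Proof.
move=> KK l l' a0 b0.
have [[HN HA HB NA NB] [AB V cn]] := lab_facts l.
have [[HN' _ _ _ _] _] := lab_facts l'.
move: cn.
set a := psub (coord A) (coord N); set b := psub (coord B) (coord N).
set a' := psub (coord A') (coord N); set b' := psub (coord B') (coord N).
move=> cn e1 e2.
set t := 1 / (2 + al + be).
have hpos : 0 < 2 + al + be by lra.
have tp : 0 < t by rewrite /t divr_gt0 //; lra.
have tq : t * (2 + al + be) = 1 by rewrite /t; field; rewrite gt_eqF.
have tal : 0 <= t * al by rewrite mulr_ge0 // ltW.
have tbe : 0 <= t * be by rewrite mulr_ge0 // ltW.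
have t1 := @tri_pt2 K N A B t t l (ltW tp) (ltW tp) ltac:(nra).
have t2 := @tri_pt2 K' N A' B' (t * al) (t * be) l' tal tbe ltac:(nra).
set p := (_, _) in t1.
have ep : p = ((coord N).1 + t * al * a'.1 + t * be * b'.1,
               (coord N).2 + t * al * a'.2 + t * be * b'.2).
  rewrite /p; congr pair.
    by rewrite -addrA -mulrDr e1; ring.
  by rewrite -addrA -mulrDr e2; ring.
rewrite -ep in t2.
have cnt : t * cross a b != 0 by rewrite mulf_neq0 // gt_eqF.
case: (boolP (A \in vset D K')) => hA'; case: (boolP (B \in vset D K')) => hB'.
- move: (vset_neq KK); rewrite eqEcard !card_vset leqnn andbT.
  apply/negP; rewrite negbK V; apply/fintype.subsetP => x.
  by rewrite !inE => /orP[/orP[]|] /eqP ->.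
- have ce : cross (psub p (coord N)) a = - (t * cross a b) by rewrite /p /cross /psub /=; ring.
  move: cnt; rewrite -oppr_eq0 -ce (@ovl K K' N a p KK t1 t2) ?eqxx // => M h1 h2.
  case: (lab_cases l h1) => eM.
  + by rewrite eM /psub /cross /=; ring.
  + by rewrite eM /a /cross; ring.
  + by move: hB'; rewrite -eM h2.
- have ce : cross (psub p (coord N)) b = t * cross a b by rewrite /p /cross /psub /=; ring.
  move: cnt; rewrite -ce (@ovl K K' N b p KK t1 t2) ?eqxx // => M h1 h2.
  case: (lab_cases l h1) => eM.
  + by rewrite eM /psub /cross /=; ring.
  + by move: hA'; rewrite -eM h2.
  + by rewrite eM /b /cross; ring.
- have ce : cross (psub p (coord N)) b = t * cross a b by rewrite /p /cross /psub /=; ring.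
  move: cnt; rewrite -ce (@ovl K K' N b p KK t1 t2) ?eqxx // => M h1 h2.
  case: (lab_cases l h1) => eM.
  + by rewrite eM /psub /cross /=; ring.
  + by move: hA'; rewrite -eM h2.
  + by move: hB'; rewrite -eM h2.
Qed.

Lemma meet N S S' : closedS N S -> closedS N S' -> (exists F, S F) -> (exists F, S' F) ->
  exists F, S F /\ S' F.
Proof.
move=> hS hS' hne [F0 SF0].
have [IE0 NF0] := hS'.1 _ SF0.
have [K [_ [_ s1 _]]] := two_tris IE0.
have [A [B [_ hl]]] := edge_lab IE0 NF0 s1.
have [S'1 S'2] := hS'.2 _ _ SF0 s1.
set u := ((psub (coord A) (coord N)).1 + (psub (coord B) (coord N)).1,
          (psub (coord A) (coord N)).2 + (psub (coord B) (coord N)).2).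
have [K' [A' [B' [l' SA' SB' [al [be [a0 b0 e1 e2]]]]]]] := cover u hS hne.
case: (eqVneq K K') => [eK|KK].
  exists [set N; A']; split => //.
  rewrite -eK in l'; by case: (labE l') => [[]->_].
exfalso; exact: (ov2 KK hl l' a0 b0 e1 e2).
Qed.

Definition Sv K N := `|(psub (coord (v1 K N)) (coord N)).1| + `|(psub (coord (v1 K N)) (coord N)).2|
  + `|(psub (coord (v2 K N)) (coord N)).1| + `|(psub (coord (v2 K N)) (coord N)).2|.
Definition WK K N := Sv K N / `|dblarea D K|.

Lemma lab_abs K N A B : lab K N A B ->
  `|cross (psub (coord A) (coord N)) (psub (coord B) (coord N))| = `|dblarea D K| /\
  `|(psub (coord A) (coord N)).1| + `|(psub (coord A) (coord N)).2|
  + `|(psub (coord B) (coord N)).1| + `|(psub (coord B) (coord N)).2| = Sv K N.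
Proof.
case=> HN [[-> ->]|[-> ->]]; rewrite /Sv; first by rewrite cross_v.
split; last by lra.
have -> : cross (psub (coord (v2 K N)) (coord N)) (psub (coord (v1 K N)) (coord N))
   = - cross (psub (coord (v1 K N)) (coord N)) (psub (coord (v2 K N)) (coord N)).
  by rewrite /cross; ring.
by rewrite normrN cross_v.
Qed.

Lemma cross_bound (u b : R * R) (e : R) : `|u.1| <= e -> `|u.2| <= e ->
  `|u.1 * b.2 - u.2 * b.1| <= e * (`|b.1| + `|b.2|).
Proof.
move=> h1 h2; apply: (le_trans (ler_normB _ _)); rewrite !normrM.
have := normr_ge0 b.1; have := normr_ge0 b.2.
have := normr_ge0 u.1; have := normr_ge0 u.2. nra.
Qed.

Lemma interior N S : closedS N S -> (exists F, S F) -> interiorV D N.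
Proof.
move=> hS hne.
set SW := \sum_K WK K N.
have W0 : forall K, 0 <= WK K N.
  by move=> K; rewrite /WK /Sv divr_ge0 // ?addr_ge0 // normr_ge0.
have SW0 : 0 <= SW by rewrite sumr_ge0.
set e := 1 / (1 + SW).
have ep : 0 < e by rewrite /e divr_gt0 //; lra.
exists e => // x [hx1 hx2].
set u := psub x (coord N).
have [K [A [B [hl _ _ [al [be [a0 b0 e1 e2]]]]]]] := cover u hS hne.
have [ca sa] := lab_abs hl.
move: e1 e2 ca sa.
set a := psub (coord A) (coord N); set b := psub (coord B) (coord N) => e1 e2 ca sa.
have dp : 0 < `|dblarea D K| by rewrite normr_gt0 dbl_neq0.
have u1 : `|u.1| <= e by rewrite /u /psub /= ltW.
have u2 : `|u.2| <= e by rewrite /u /psub /= ltW.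
have hal : al * `|dblarea D K| <= e * (`|b.1| + `|b.2|).
  have : al * cross a b = u.1 * b.2 - u.2 * b.1 by rewrite e1 e2 /cross; ring.
  move=> h; rewrite -ca -(ger0_norm a0) -normrM h; exact: cross_bound.
have hbe : be * `|dblarea D K| <= e * (`|a.1| + `|a.2|).
  have : be * cross a b = - (u.1 * a.2 - u.2 * a.1) by rewrite e1 e2 /cross; ring.
  move=> h; rewrite -ca -(ger0_norm b0) -normrM h normrN; exact: cross_bound.
have hW : WK K N <= SW by rewrite /SW (bigD1 K) //= lerDl sumr_ge0.
have eW : e * WK K N < 1.
  rewrite /e mul1r ltr_pdivrMl; last by lra.
  by lra.
have eS : e * Sv K N = e * WK K N * `|dblarea D K|.
  by rewrite /WK -mulrA divfK // gt_eqF.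
have hsum : (al + be) * `|dblarea D K| < `|dblarea D K|.
  apply: (le_lt_trans (y := e * Sv K N)).
    by rewrite -sa; lra.
  by rewrite eS; rewrite -[X in _ < X]mul1r ltr_pM2r.
have ab1 : al + be <= 1.
  by apply: ltW; rewrite -(ltr_pM2r dp) mul1r.
have := @tri_pt2 K N A B al be hl a0 b0 ab1.
have -> : x = ((coord N).1 + al * a.1 + be * b.1, (coord N).2 + al * a.2 + be * b.2).
  rewrite -addrA -addrA -e1 -e2 /u /psub /=; case: x {hx1 hx2 u e1 e2 u1 u2 hal hbe} => p q /=.
  by congr pair; ring.
by move=> h; exists K.
Qed.

Definition Sc (mu : Mfun R Vt) N (c : R) : pred {set Vt} :=
  fun F => isIE D F && (N \in F) && (yv mu N F == c).

Lemma Sc_closed (mu : Mfun R Vt) N c : c != 0 ->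
  (forall K, N \in vset D K -> bform D mu (hatK D N K) = 0) -> closedS N (Sc mu N c).
Proof.
move=> c0 H0; split.
  by move=> F /andP[/andP[-> ->]].
move=> F K /andP[/andP[IE NF] /eqP yc] sF.
have HN : N \in vset D K by apply: (fintype.subsetP sF).
have [_ _ n1 n2 _] := E12_prop HN.
have [r1 r2 r3] := tri_rel HN (H0 K HN).
rewrite /Sc n1 n2 !andbT.
case: (edges_at HN sF NF (isIE_card IE)) => eF; rewrite eF in IE yc.
- case: (boolP (isIE D (E2 K N))) => I2.
    by split; apply/andP; split => //; apply/eqP; rewrite -?(r1 IE I2).
  by move: c0; rewrite -yc r2 ?eqxx.
- case: (boolP (isIE D (E1 K N))) => I1.
    by split; apply/andP; split => //; apply/eqP; rewrite ?(r1 I1 IE).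
  by move: c0; rewrite -yc r3 ?eqxx.
Qed.

Lemma loc N (mu : Mfun R Vt) :
  (forall K, N \in vset D K -> bform D mu (hatK D N K) = 0) ->
  (interiorV D N -> \sum_(F | isIE D F && (N \in F)) sgnN D N F * elen D F * mu F N = 0) ->
  forall F, isIE D F -> N \in F -> mu F N = 0.
Proof.
move=> H0 Hin F0 IE0 NF0.
apply/eqP; apply/negPn/negP => m0.
set c := yv mu N F0.
have sg : forall F, sgnN D N F != 0.
  by move=> F; rewrite /sgnN; case: ifP => _; rewrite ?oppr_eq0 oner_eq0.
have c0 : c != 0.
  by rewrite /c /yv !mulf_neq0 // gt_eqF // elen_pos // isIE_card.
have cl := Sc_closed c0 H0.
have ne : exists F, Sc mu N c F by exists F0; rewrite /Sc IE0 NF0 eqxx.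
have hint := Hin (interior cl ne).
have dich : forall F, isIE D F -> N \in F -> yv mu N F = 0 \/ yv mu N F = c.
  move=> F IE NF; case: (eqVneq (yv mu N F) 0) => [->|y0]; first by left.
  right; have cl' := Sc_closed y0 H0.
  have ne' : exists G, Sc mu N (yv mu N F) G by exists F; rewrite /Sc IE NF eqxx.
  have [G [/andP[_ /eqP h1] /andP[_ /eqP h2]]] := meet cl cl' ne ne'.
  by rewrite -h1 -h2.
move: hint.
rewrite (eq_bigr (fun F => c * (if yv mu N F == c then 1 else 0))); last first.
  move=> F /andP[IE NF]; rewrite -mulrA -/(yv mu N F).
  by case: (dich F IE NF) => ->; rewrite ?eqxx ?mulr1 // eq_sym (negbTE c0) mulr0.
rewrite -mulr_sumr => /eqP; rewrite mulf_eq0 (negbTE c0) /=.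
rewrite (bigD1 F0) /=; last by rewrite IE0 NF0.
rewrite eqxx; apply/negP; rewrite gt_eqF //.
by apply: (lt_le_trans ltr01); rewrite lerDl sumr_ge0 // => F _; case: ifP.
Qed.

Lemma bform_lin (a : Mfun R Vt) (b : Vt -> Mfun R Vt) w :
  bform D (fun F M => a F M - \sum_N b N F M) w = bform D a w - \sum_N bform D (b N) w.
Proof.
rewrite /bform exchange_big /= -sumrB; apply: eq_bigr => F _.
rewrite -mulr_sumr -mulrBr; congr (_ * _).
rewrite exchange_big /= -sumrB; apply: eq_bigr => M _.
by rewrite mulrBl mulr_suml.
Qed.

Lemma inMh_lin (a : Mfun R Vt) (b : Vt -> Mfun R Vt) :
  inMh D a -> (forall N, inMh D (b N)) -> inMh D (fun F M => a F M - \sum_N b N F M).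
Proof.
move=> ha hb N' HN'.
rewrite (eq_bigr (fun F => sgnN D N' F * elen D F * a F N' -
    \sum_N sgnN D N' F * elen D F * b N F N')); last first.
  by move=> F _; rewrite mulrBr mulr_sumr.
rewrite sumrB ha // exchange_big /= big1 ?subr0 // => N _.
exact: hb.
Qed.

Lemma bform_hat_zero (mu : Mfun R Vt) M K :
  (forall F, isIE D F -> F \subset vset D K -> M \in F -> mu F M = 0) ->
  bform D mu (hatK D M K) = 0.
Proof.
move=> h; rewrite bform_hat big1 // => F IE.
by case: ifP => [/andP[sF MF]|]; rewrite ?h ?mul0r ?mulr0.
Qed.

End Main.

Unset Implicit Arguments.
Set Strict Implicit.

Theorem mainTheorem4 (R : realType) (Vt El : finType) (D : fem_data R Vt El)
  (HD : fem_assumptions D)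
  (uh : DGfun R El) (thetah : Mfun R Vt)
  (* (uh, thetah) in DG_h x M_h solves the mixed problem *)
  (Hth : inMh D thetah)
  (Hmix1 : forall w : DGfun R El, aht D uh w + bform D thetah w = lh D w)
  (Hmix2 : forall mu : Mfun R Vt, inMh D mu -> bform D mu uh = 0)
  (* the local multipliers theta_N *)
  (theta : Vt -> Mfun R Vt)
  (HthN : forall N : Vt,
     if [exists F, isIE D F && (N \in F)] then
       [/\ inMh D (theta N),
           (forall F M, isIE D F -> N \notin F -> M \in F -> theta N F M = 0) &
           forall K, N \in vset D K ->
             bform D (theta N) (hatK D N K) = resid D uh (hatK D N K) /\
             (forall M, M \in vset D K -> M != N ->
                bform D (theta N) (hatK D M K) = 0)]
     else forall F M, isIE D F -> M \in F -> theta N F M = 0) :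
  forall F M, isIE D F -> M \in F -> thetah F M = \sum_(N : Vt) theta N F M.
Proof.
move=> F M IE MF; apply/eqP; rewrite -subr_eq0; apply/eqP.
set mu := fun F M => thetah F M - \sum_N theta N F M.
have bres : forall w, bform D thetah w = resid D uh w.
  by move=> w; rewrite /resid -(Hmix1 w) addrC addKr.
have inth : forall N, inMh D (theta N).
  move=> N; have := HthN N; case: ifP => [_ [] //|_ h0] N' _.
  by rewrite big1 // => G /andP[IG NG]; rewrite h0 ?mulr0.
have hmu : inMh D mu by apply: inMh_lin.
have bz : forall M' K, M' \in vset D K -> bform D mu (hatK D M' K) = 0.
  move=> M' K HM'; rewrite bform_lin (bigD1 M') //= big1 ?addr0; last first.
    move=> N NM; have := HthN N; case: ifP => [_ [_ van hc]|_ h0].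
      case: (boolP (N \in vset D K)) => HN.
        by apply: (hc K HN).2 => //; rewrite eq_sym.
      apply: (bform_hat_zero HD) => G IG sG MG; apply: van => //.
      by apply: contra HN; apply: (fintype.subsetP sG).
    by apply: (bform_hat_zero HD) => G IG sG MG; apply: h0.
  have := HthN M'; case: ifP => [_ [_ _ hc]|hne h0].
    by rewrite (hc K HM').1 bres subrr.
  rewrite !(bform_hat_zero HD) ?subrr // => G IG sG MG.
    by rewrite h0.
  by move/negbT: hne => /existsP; case; exists G; rewrite IG MG.
apply: (loc HD (N := M) (mu := mu)) => //.
  by move=> K HK; apply: bz.
by move=> hi; apply: hmu.
Qed.
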